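(* Fix a monomial order on $S$. Let $J,E,E'$ be ideals of $S$ and $\mathcal G_J$ a Gröbner basis of $J$, and assume $E$ and $E'$ are S-nice with respect to $\mathcal G_J$. Then $(J+E)\cap(J+E')=J+(E\cap E')$ if and only if $\mathrm{in}((J+E)\cap(J+E'))=\mathrm{in}(J)+\mathrm{in}(E\cap E')$.
   Context: $K$ is a field and $S=K[x_1,\ldots,x_n]$ with a fixed monomial order. For $0\neq f\in S$, $\mathrm{in}(f)$ denotes its leading monomial and $\mathrm{LT}(f)$ its leading term; for an ideal $I$, $\mathrm{in}(I)$ is the ideal generated by the leading monomials of the nonzero elements of $I$. For nonzero $f,g\in S$ the S-polynomial is $S(f,g)=\frac{\mathrm{lcm}(\mathrm{in}(f),\mathrm{in}(g))}{\mathrm{LT}(f)}f-\frac{\mathrm{lcm}(\mathrm{in}(f),\mathrm{in}(g))}{\mathrm{LT}(g)}g$. Given a Gröbner basis $\mathcal G_J$ of an ideal $J$, an ideal $E$ is called S-nice with respect to $\mathcal G_J$ if $S(f,g)\in E$ for all $f\in\mathcal G_J$ and all nonzero $g\in E$. *)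

(* Defs.v *)
From HB Require Import structures.
From mathcomp Require Import all_boot all_order all_algebra.
From mathcomp Require Import mpoly.
Set Implicit Arguments. Unset Strict Implicit. Unset Printing Implicit Defensive.
Import GRing.Theory.
Local Open Scope ring_scope.

Section Groebner.
Variables (n : nat) (K : fieldType).
Local Notation S := {mpoly K[n]}.
Local Notation mon := 'X_{1..n}.

(* A monomial order: a total order on monomials, compatible with
   multiplication (addition of exponents), with 1 = 0%MM the least monomial
   (hence a well-order, by Dickson's lemma). *)
Definition monomial_order (le : rel mon) : Prop :=
  [/\ [/\ reflexive le, antisymmetric le, transitive le & total le],
      (forall m1 m2 m3, le m1 m2 -> le (m1 + m3)%MM (m2 + m3)%MM)
    & (forall m, le 0%MM m)].

(* Leading monomial in(f): the le-maximum of the support of f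
   (meaningful for f != 0; defaults to an arbitrary value for f = 0). *)
Definition lmon (le : rel mon) (f : S) : mon :=
  foldr (fun m acc => if le acc m then m else acc) (head 0%MM (msupp f)) (msupp f).

Definition lcoef (le : rel mon) (f : S) : K := f@_(lmon le f).
Definition lterm (le : rel mon) (f : S) : S := lcoef le f *: 'X_[lmon le f].

Definition spoly (le : rel mon) (f g : S) : S :=
  let L := mlcm (lmon le f) (lmon le g) in
  ((lcoef le f)^-1 *: 'X_[L - lmon le f]) * f
  - ((lcoef le g)^-1 *: 'X_[L - lmon le g]) * g.

Definition is_ideal (I : S -> Prop) : Prop :=
  [/\ I 0, (forall a b, I a -> I b -> I (a + b)) & (forall r a, I a -> I (r * a))].

Definition ideal_gen (G : S -> Prop) : S -> Prop := fun p =>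
  exists s : seq (S * S), (forall x, x \in s -> G x.2) /\
    p = \sum_(x <- s) x.1 * x.2.

Definition ideal_sum (I J : S -> Prop) : S -> Prop := fun p =>
  exists a b, I a /\ J b /\ p = a + b.

Definition ideal_cap (I J : S -> Prop) : S -> Prop := fun p => I p /\ J p.

Definition set_eq (I J : S -> Prop) : Prop := forall p, I p <-> J p.

Definition init_ideal (le : rel mon) (I : S -> Prop) : S -> Prop :=
  ideal_gen (fun q => exists f, I f /\ f != 0 /\ q = 'X_[lmon le f]).

Definition groebner_basis (le : rel mon) (G : seq S) (J : S -> Prop) : Prop :=
  [/\ (forall g, g \in G -> J g), (forall g, g \in G -> g != 0)
    & set_eq (init_ideal le J)
             (ideal_gen (fun q => exists2 g, g \in G & q = 'X_[lmon le g]))].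

Definition S_nice (le : rel mon) (G : seq S) (E : S -> Prop) : Prop :=
  forall f g, f \in G -> E g -> g != 0 -> E (spoly le f g).

End Groebner.

(* Main.v *)
Require Import Defs.
From mathcomp Require Import all_boot all_order all_algebra.
From mathcomp Require Import mpoly.
From Stdlib Require Import Classical ClassicalEpsilon.
Set Implicit Arguments. Unset Strict Implicit. Unset Printing Implicit Defensive.
Import GRing.Theory.
Local Open Scope ring_scope.

Lemma chain_leq (u : nat -> nat) : (forall k, (u k <= u k.+1)%N) ->
  forall k k', (k <= k')%N -> (u k <= u k')%N.
Proof.
move=> H k k'; elim: k' => [|k' IH]; first by rewrite leqn0 => /eqP ->.
rewrite leq_eqVlt => /orP [/eqP -> //|]; rewrite ltnS => /IH h.
exact: leq_trans h (H k').
Qed.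

Lemma chain_ltn (u : nat -> nat) : (forall k, (u k < u k.+1)%N) ->
  forall k k', (k < k')%N -> (u k < u k')%N.
Proof.
move=> H k k' lt; have := chain_leq (u := fun k => u k) (fun k => ltnW (H k)).
move=> C; apply: leq_trans (H k) _; exact: C.
Qed.

Lemma argmin_ex (u : nat -> nat) N :
  exists j, (N <= j)%N /\ forall k, (N <= k)%N -> (u j <= u k)%N.
Proof.
apply: NNPP => Hn.
have H1 : forall j, (N <= j)%N -> exists k, (N <= k)%N /\ (u k < u j)%N.
  move=> j Nj; apply: NNPP => Hk; apply: Hn; exists j; split=> // k Nk.
  rewrite leqNgt; apply/negP => lt; apply: Hk; by exists k.
have H2 : forall v j, (N <= j)%N -> (v <= u j)%N.
  elim=> [//|v IH] j Nj; have [k [Nk lt]] := H1 j Nj.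
  exact: leq_ltn_trans (IH k Nk) lt.
by have := H2 (u N).+1 N (leqnn N); rewrite ltnn.
Qed.

Lemma sub_mono (u : nat -> nat) : exists phi : nat -> nat,
  (forall k, (phi k < phi k.+1)%N) /\ (forall k, (u (phi k) <= u (phi k.+1))%N).
Proof.
pose g N := proj1_sig (constructive_indefinite_description _ (argmin_ex u N)).
have gP N : (N <= g N)%N /\ forall k, (N <= k)%N -> (u (g N) <= u k)%N.
  rewrite /g; case: constructive_indefinite_description => //.
pose phi := fix phi k := if k is k'.+1 then g (phi k').+1 else g 0.
have Hinc k : (phi k < phi k.+1)%N by rewrite /=; case: (gP (phi k).+1).
exists phi; split=> // k.
have [M [EM HM]] : exists M, phi k = g M /\ (M <= phi k)%N.
  case: k => [|k] /=; [exists 0 | exists (phi k).+1]; split=> //; rewrite -/phi.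
rewrite EM; case: (gP M) => _ h; apply: h; apply: leq_trans HM _; exact: ltnW.
Qed.

Section Dickson.
Variable n : nat.

Lemma dickson_strong (s : nat -> 'X_{1..n}) (l : seq 'I_n) : exists phi : nat -> nat,
  (forall k, (phi k < phi k.+1)%N) /\
  (forall i, i \in l -> forall k, (s (phi k) i <= s (phi k.+1) i)%N).
Proof.
elim: l => [|i l [phi [Hphi Hl]]].
  by exists id; split=> // i; rewrite in_nil.
have [psi [Hpsi Hu]] := sub_mono (fun k => s (phi k) i).
exists (fun k => phi (psi k)); split.
  move=> k; apply: chain_ltn => //.
move=> j; rewrite in_cons => /orP [/eqP -> //|jl] k.
apply: (chain_leq (u := fun k => s (phi k) j)) => //.
  by move=> k'; apply: Hl.
exact: ltnW.
Qed.

Lemma dickson (s : nat -> 'X_{1..n}) : exists i j, (i < j)%N /\ (s i <= s j)%MM.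
Proof.
have [phi [H1 H2]] := dickson_strong s (enum 'I_n).
exists (phi 0), (phi 1); split=> //.
apply/mnm_lepP => i; apply: H2; by rewrite mem_enum.
Qed.

Variable le : rel 'X_{1..n}.
Hypothesis Hle : monomial_order le.

Definition mlt (a b : 'X_{1..n}) := le a b && (a != b).

Lemma mo_refl : reflexive le. Proof. by case: Hle => [[]]. Qed.
Lemma mo_anti : antisymmetric le. Proof. by case: Hle => [[]]. Qed.
Lemma mo_trans : transitive le. Proof. by case: Hle => [[]]. Qed.
Lemma mo_total : total le. Proof. by case: Hle => [[]]. Qed.
Lemma mo_add m1 m2 m3 : le m1 m2 -> le (m1 + m3)%MM (m2 + m3)%MM.
Proof. by case: Hle => _ h _; apply: h. Qed.
Lemma mo_0 m : le 0%MM m. Proof. by case: Hle. Qed.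

Lemma mo_div a b : (a <= b)%MM -> le a b.
Proof.
move=> h; rewrite -(submK h); have := mo_add a (mo_0 (b - a)%MM).
by rewrite add0m addmC.
Qed.

Lemma mlt_le_trans a b c : mlt a b -> le b c -> mlt a c.
Proof.
case/andP=> ab nab bc; rewrite /mlt (mo_trans ab bc) /=.
apply/eqP => E; subst c; move/negP: nab; apply; apply/eqP; apply: mo_anti; by rewrite ab bc.
Qed.

Lemma mlt_wf : well_founded mlt.
Proof.
move=> a0; apply: NNPP => Ha0.
have step x : ~ Acc mlt x -> exists y, mlt y x /\ ~ Acc mlt y.
  move=> Hx; apply: NNPP => Hy; apply: Hx; constructor => y lt.
  apply: NNPP => Hy'; apply: Hy; by exists y.
pose T := {x | ~ Acc mlt x}.
pose nx (t : T) : T :=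
  let: exist x hx := t in
  let: exist y hy := constructive_indefinite_description _ (step x hx) in
  exist _ y (proj2 hy).
pose sq := fix sq k := if k is k'.+1 then nx (sq k') else exist _ a0 Ha0 : T.
pose s k := proj1_sig (sq k).
have Hs k : mlt (s k.+1) (s k).
  rewrite /s /=; case: (sq k) => x hx /=.
  by case: constructive_indefinite_description => y [].
have Hle' k k' : (k <= k')%N -> le (s k') (s k).
  elim: k' => [|k' IH]; first by rewrite leqn0 => /eqP ->; apply: mo_refl.
  rewrite leq_eqVlt => /orP [/eqP -> |]; first by apply: mo_refl.
  rewrite ltnS => /IH h; case/andP: (Hs k') => h' _; exact: mo_trans h' h.
have [i [j [ij dij]]] := dickson s.
have l1 := mo_div dij.
have l2 := Hle' _ _ ij.
case/andP: (Hs i) => l3 nq.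
have l4 : le (s i) (s i.+1) := mo_trans l1 l2.
move/negP: nq; apply; apply/eqP; apply: mo_anti; by rewrite l3 l4.
Qed.

End Dickson.
Section Poly.
Variables (n : nat) (K : fieldType) (le : rel 'X_{1..n}).
Hypothesis Hle : monomial_order le.
Local Notation S := {mpoly K[n]}.
Local Notation lm := (lmon le).
Local Notation lc := (lcoef le).
Local Notation mlt := (mlt le).

Lemma tr a b c : le a b -> le b c -> le a c.
Proof. move=> h1 h2; exact: (mo_trans Hle h1 h2). Qed.

Lemma rfl m : le m m. Proof. by case: Hle => [[]]. Qed.
Lemma tot a b : le a b || le b a. Proof. by case: Hle => [[_ _ _ h] _ _]; apply: h. Qed.
Lemma anti a b : le a b -> le b a -> a = b.
Proof. move=> h1 h2; case: Hle => [[_ h _ _] _ _]; apply: h; by rewrite h1 h2. Qed.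
Lemma madd m1 m2 m3 : le m1 m2 -> le (m1 + m3)%MM (m2 + m3)%MM.
Proof. by case: Hle => _ h _; apply: h. Qed.

Definition bnd (f : S) mu := forall m, f@_m != 0 -> le m mu.

Lemma foldr_max (s : seq 'X_{1..n}) d :
  let r := foldr (fun m acc => if le acc m then m else acc) d s in
  [/\ r \in d :: s, le d r & forall m, m \in s -> le m r].
Proof.
elim: s => [|x s [IH1 IH2 IH3]] /=.
  split; [by rewrite mem_seq1 | exact: rfl | by []].
set r' := foldr _ _ _ in IH1 IH2 IH3 *.
case: ifP => h; split.
- by rewrite !inE eqxx orbT.
- exact: tr IH2 h.
- move=> m; rewrite inE => /orP [/eqP -> |/IH3 hm]; first exact: rfl.
  exact: tr hm h.
- move: IH1; rewrite !inE => /orP [->//|->]; by rewrite !orbT.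
- done.
- move=> m; rewrite inE => /orP [/eqP -> |/IH3 //].
  by case/orP: (tot r' x) => //; rewrite h.
Qed.

Lemma lm_max (f : S) m : f@_m != 0 -> le m (lm f).
Proof. rewrite -mcoeff_msupp => h; have [_ _ H] := foldr_max (msupp f) (head 0%MM (msupp f)); exact: H. Qed.

Lemma bnd_lm (f : S) : bnd f (lm f).
Proof. move=> m; exact: lm_max. Qed.

Lemma lm_supp (f : S) : f != 0 -> f@_(lm f) != 0.
Proof.
move=> nz; rewrite -mcoeff_msupp /lmon.
have [H _ _] := foldr_max (msupp f) (head 0%MM (msupp f)).
move: H; case E: (msupp f) => [|x s].
  by move/eqP: E; rewrite msupp_eq0 (negbTE nz).
by rewrite /= inE => /orP [/eqP ->|//]; rewrite inE eqxx.
Qed.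

Lemma lc_neq0 (f : S) : f != 0 -> lc f != 0.
Proof. exact: lm_supp. Qed.

Lemma lm_uniq (f : S) mu : f@_mu != 0 -> bnd f mu -> lm f = mu.
Proof.
move=> h b; have nz : f != 0 by apply: contraNneq h => ->; rewrite mcoeff0.
apply: anti; last exact: lm_max h; apply: b; exact: lm_supp.
Qed.

Lemma bnd0 mu : bnd 0 mu.
Proof. by move=> m; rewrite mcoeff0 eqxx. Qed.

Lemma bndD (f g : S) mu : bnd f mu -> bnd g mu -> bnd (f + g) mu.
Proof.
move=> bf bg m; rewrite mcoeffD; have [/bf //|fm] := boolP (f@_m != 0).
move: fm; rewrite negbK => /eqP ->; rewrite add0r; exact: bg.
Qed.

Lemma bndN (f : S) mu : bnd f mu -> bnd (- f) mu.
Proof. by move=> bf m; rewrite mcoeffN oppr_eq0; apply: bf. Qed.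

Lemma bnd_trans (f : S) mu nu : bnd f mu -> le mu nu -> bnd f nu.
Proof. move=> b h m /b h'; exact: tr h' h. Qed.

Lemma coefMX_neq0 (p : S) d k : (p * 'X_[d])@_k != 0 -> exists2 m, p@_m != 0 & k = (d + m)%MM.
Proof.
rewrite -mcoeff_msupp (perm_mem (msuppMX p d)) => /mapP [m hm ->].
by exists m; rewrite // -mcoeff_msupp.
Qed.

Lemma coefXM_neq0 (p : S) d k : ('X_[d] * p)@_k != 0 -> exists2 m, p@_m != 0 & k = (d + m)%MM.
Proof. rewrite mulrC; exact: coefMX_neq0. Qed.

Lemma cancel_lem (b : S) mu (c : K) : b != 0 -> (lm b <= mu)%MM ->
  let t := (c / lc b) *: 'X_[mu - lm b] in
  (t * b)@_mu = c /\ bnd (t * b) mu.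
Proof.
move=> nz dv t; have lcnz := lc_neq0 nz.
have Emu : mu = (mu - lm b + lm b)%MM by rewrite submK.
split.
  rewrite /t -scalerAl mcoeffZ mulrC.
  rewrite (mulrC _ b) [X in _@_X]Emu mcoeffMX -/(lcoef le b) mulrC -mulrA mulVf // mulr1.
  done.
move=> m; rewrite /t -scalerAl mcoeffZ mulf_eq0 negb_or => /andP [_].
rewrite mulrC => /coefMX_neq0 [m' h ->].
rewrite [X in le _ X]Emu (addmC _ m') (addmC (mu - lm b)%MM (lm b)); apply: madd; exact: lm_max.
Qed.

Lemma mlt_strict_bnd (f : S) mu : bnd f mu -> f@_mu = 0 -> forall m, f@_m != 0 -> mlt m mu.
Proof.
move=> b z m h; rewrite /mlt (b m h) /=; apply: contraNneq h => ->; by rewrite z.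
Qed.

Lemma two_bnd (a b : S) mu :
  (forall m, a@_m != 0 -> mlt m mu) -> (forall m, b@_m != 0 -> mlt m mu) ->
  a != 0 \/ b != 0 -> exists nu, [/\ mlt nu mu, bnd a nu & bnd b nu].
Proof.
move=> ha hb nz.
have [az|anz] := eqVneq a 0.
  have bnz : b != 0 by case: nz => //; rewrite az eqxx.
  exists (lm b); split; [exact: hb (lm_supp bnz) | rewrite az; exact: bnd0 | exact: bnd_lm].
have [bz|bnz] := eqVneq b 0.
  exists (lm a); split; [exact: ha (lm_supp anz) | exact: bnd_lm | rewrite bz; exact: bnd0].
case/orP: (tot (lm a) (lm b)) => h.
  exists (lm b); split; [exact: hb (lm_supp bnz) | exact: bnd_trans (@bnd_lm a) h | exact: bnd_lm].
exists (lm a); split; [exact: ha (lm_supp anz) | exact: bnd_lm | exact: bnd_trans (@bnd_lm b) h].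
Qed.

Lemma bnd_both (a b : S) : exists mu, bnd a mu /\ bnd b mu.
Proof.
case/orP: (tot (lm a) (lm b)) => h.
  by exists (lm b); split; [exact: bnd_trans (@bnd_lm a) h | exact: bnd_lm].
by exists (lm a); split; [exact: bnd_lm | exact: bnd_trans (@bnd_lm b) h].
Qed.



Lemma gen1 (G : S -> Prop) q : G q -> ideal_gen G q.
Proof. by move=> h; exists [:: (1, q)]; split; [move=> x; rewrite inE => /eqP -> | rewrite big_seq1 mul1r]. Qed.

Lemma gen_ideal (G : S -> Prop) : is_ideal (ideal_gen G).
Proof.
split.
- by exists [::]; rewrite big_nil.
- move=> a b [s1 [H1 ->]] [s2 [H2 ->]]; exists (s1 ++ s2); split; last by rewrite big_cat.
  by move=> x; rewrite mem_cat => /orP [/H1|/H2].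
- move=> r a [s [H ->]]; exists [seq (r * x.1, x.2) | x <- s]; split.
    by move=> x /mapP [y ys ->]; exact: H y ys.
  by rewrite big_map mulr_sumr; apply: eq_bigr => x _; rewrite mulrA.
Qed.

Lemma gen_sub (G I : S -> Prop) : is_ideal I -> (forall q, G q -> I q) ->
  forall p, ideal_gen G p -> I p.
Proof.
move=> [I0 ID IM] HG p [s [H ->]]; elim: s H => [|x s IH] H; first by rewrite big_nil.
rewrite big_cons; apply: ID; first by apply: IM; apply: HG; apply: H; rewrite inE eqxx.
by apply: IH => y ys; apply: H; rewrite inE ys orbT.
Qed.

Lemma gen_mono (G G' : S -> Prop) : (forall q, G q -> G' q) ->
  forall p, ideal_gen G p -> ideal_gen G' p.
Proof. move=> h; apply: gen_sub; first exact: gen_ideal. by move=> q /h; apply: gen1. Qed.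

Lemma sum_ideal (I J : S -> Prop) : is_ideal I -> is_ideal J -> is_ideal (ideal_sum I J).
Proof.
move=> [I0 ID IM] [J0 JD JM]; split.
- by exists 0, 0; rewrite addr0.
- move=> a b [a1 [a2 [h1 [h2 ->]]]] [b1 [b2 [h3 [h4 ->]]]].
  by exists (a1 + b1), (a2 + b2); split; [apply: ID | split; [apply: JD|rewrite addrACA]].
- move=> r a [a1 [a2 [h1 [h2 ->]]]]; exists (r * a1), (r * a2).
  by split; [apply: IM | split; [apply: JM | rewrite mulrDr]].
Qed.

Lemma cap_ideal (I J : S -> Prop) : is_ideal I -> is_ideal J -> is_ideal (ideal_cap I J).
Proof.
move=> [I0 ID IM] [J0 JD JM]; split => //.
- by move=> a b [? ?] [? ?]; split; [apply: ID | apply: JD].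
- by move=> r a [? ?]; split; [apply: IM | apply: JM].
Qed.

Lemma idealN (I : S -> Prop) a : is_ideal I -> I a -> I (- a).
Proof. by move=> [_ _ IM] h; rewrite -mulN1r; apply: IM. Qed.

Lemma idealB (I : S -> Prop) a b : is_ideal I -> I a -> I b -> I (a - b).
Proof. by move=> II ha hb; case: (II) => _ ID _; apply: ID => //; apply: idealN. Qed.

Lemma gen_coef (s : seq (S * S)) mu : (\sum_(x <- s) x.1 * x.2)@_mu != 0 ->
  exists2 x, x \in s & (x.1 * x.2)@_mu != 0.
Proof.
elim: s => [|x s IH]; first by rewrite big_nil mcoeff0 eqxx.
rewrite big_cons mcoeffD; have [h|h] := eqVneq ((x.1 * x.2)@_mu) 0.
  by rewrite h add0r => /IH [y ys hy]; exists y => //; rewrite inE ys orbT.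
by move=> _; exists x => //; rewrite inE eqxx.
Qed.

Lemma divX (Q : 'X_{1..n} -> Prop) mu :
  ideal_gen (fun q : S => exists m, Q m /\ q = 'X_[m]) 'X_[mu] -> exists m, Q m /\ (m <= mu)%MM.
Proof.
move=> [s [Hs E]].
have : (\sum_(x <- s) x.1 * x.2)@_mu != 0 by rewrite -E mcoeffX eqxx oner_neq0.
move/gen_coef => [x xs]; have [m [Qm E2]] := Hs x xs; rewrite E2 => /coefMX_neq0 [m' _ ->].
by exists m; split => //; apply: lem_addr.
Qed.

Lemma init_div (I : S -> Prop) mu :
  init_ideal le I 'X_[mu] -> exists f, [/\ I f, f != 0 & (lm f <= mu)%MM].
Proof.
move=> h; have := divX (Q := fun m => exists f, [/\ I f, f != 0 & m = lm f]) (mu := mu).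
case.
  move: h; apply: gen_mono => q [f [If [fnz ->]]]; exists (lm f); split => //; by exists f.
by move=> m [[f [If fnz ->]] dv]; exists f.
Qed.

Lemma subm_id (m : 'X_{1..n}) : (m - m)%MM = 0%MM.
Proof. by apply/mnmP => i; rewrite !mnmE subnn. Qed.

Lemma key_desc (J E : S -> Prop) (GJ : seq S) :
  is_ideal J -> is_ideal E -> groebner_basis le GJ J -> S_nice le GJ E ->
  forall mu j e, J j -> E e -> bnd j mu -> bnd e mu -> j + e != 0 ->
  exists x, [/\ J x \/ E x, x != 0 & (lm x <= lm (j + e))%MM].
Proof.
move=> IJ IE GB SN mu; elim/(well_founded_ind (mlt_wf Hle)): mu => mu IH j e Jj Ee bj be nz.
have [j0|jnz] := eqVneq j 0.
  exists e; split; [by right | by move: nz; rewrite j0 add0r | by rewrite j0 add0r lepm_refl].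
have [e0|enz] := eqVneq e 0.
  exists j; split; [by left | by move: nz; rewrite e0 addr0 | by rewrite e0 addr0 lepm_refl].
have [Hab|Hab] := eqVneq (lm j) (lm e); last first.
  case/orP: (tot (lm j) (lm e)) => h.
    have jz : j@_(lm e) = 0.
      case: (eqVneq (j@_(lm e)) 0) => // /lm_max h'.
      by rewrite (anti h h') eqxx in Hab.
    have E1 : lm (j + e) = lm e.
      apply: lm_uniq; first by rewrite mcoeffD jz add0r; exact: lm_supp.
      by apply: bndD; [exact: bnd_trans (@bnd_lm j) h | exact: bnd_lm].
    by exists e; split; [right | | rewrite E1 lepm_refl].
  have ez : e@_(lm j) = 0.
    case: (eqVneq (e@_(lm j)) 0) => // /lm_max h'.
    by rewrite (anti h' h) eqxx in Hab.
  have E1 : lm (j + e) = lm j.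
    apply: lm_uniq; first by rewrite mcoeffD ez addr0; exact: lm_supp.
    by apply: bndD; [exact: bnd_lm | exact: bnd_trans (@bnd_lm e) h].
  by exists j; split; [left | | rewrite E1 lepm_refl].
have jc : j@_(lm e) = lc j by rewrite /lcoef Hab.
have [Hc|Hc] := eqVneq (lc j + lc e) 0; last first.
  have E1 : lm (j + e) = lm e.
    apply: lm_uniq; first by rewrite mcoeffD jc.
    by apply: bndD; [rewrite -Hab; exact: bnd_lm | exact: bnd_lm].
  by exists j; split; [left | | rewrite E1 Hab lepm_refl].
case: GB => GJin GJnz GBeq.
have : init_ideal le J 'X_[lm j] by apply: gen1; exists j.
move/GBeq => H.
have [m [[f fG Em] dv]] : exists m, (exists2 f, f \in GJ & m = lm f) /\ (m <= lm j)%MM.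
  apply: divX; move: H; apply: gen_mono => q [g gG ->]; exists (lm g); split => //; by exists g.
subst m; have Jf := GJin f fG; have fnz := GJnz f fG.
rewrite Hab in dv.
have [tc tb] := cancel_lem (lc e) fnz dv.
set t := (lc e / lc f) *: 'X_[(lm e - lm f)] in tc tb.
pose j' := j + t * f; pose e' := e - t * f.
have Jj' : J j'.
  by case: IJ => _ ID IM; apply: ID => //; apply: IM.
have Ee' : E e'.
  have Sp := SN f e fG Ee enz.
  have -> : e' = (- lc e)%:MP * spoly le f e.
    rewrite /spoly.
    have -> : mlcm (lm f) (lm e) = lm e by rewrite mlcmE addmC submK.
    rewrite subm_id mpolyX0 /e' /t mul_mpolyC scalerBr -!scalerAl scalerA.
    rewrite scalerA !mulNr mulfV; last exact: lc_neq0.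
    by rewrite scaleN1r mul1r opprK scaleNr addrC.
  by case: IE => _ _ IM; apply: IM.
have sumE : j' + e' = j + e by rewrite /j' /e' addrACA subrr addr0.
have bje : bnd j (lm e) by rewrite -Hab; exact: bnd_lm.
have b1 : bnd j' (lm e) by apply: bndD.
have b2 : bnd e' (lm e) by apply: bndD; [exact: bnd_lm | exact: bndN].
have z1 : j'@_(lm e) = 0 by rewrite /j' mcoeffD tc jc.
have z2 : e'@_(lm e) = 0 by rewrite /e' mcoeffB tc subrr.
have nz' : j' != 0 \/ e' != 0.
  case: (eqVneq j' 0) => [j'0|]; [right | by left].
  by apply: contraNneq nz => e'0; rewrite -sumE j'0 e'0 addr0.
have [nu [nlt bj' be']] := two_bnd (mlt_strict_bnd b1 z1) (mlt_strict_bnd b2 z2) nz'.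
have lemu : le (lm e) mu by apply: be; exact: lm_supp.
have nz2 : j' + e' != 0 by rewrite sumE.
have := IH nu (mlt_le_trans Hle nlt lemu) j' e' Jj' Ee' bj' be' nz2.
by rewrite sumE.
Qed.

Lemma key (J E : S -> Prop) (GJ : seq S) :
  is_ideal J -> is_ideal E -> groebner_basis le GJ J -> S_nice le GJ E ->
  forall h, ideal_sum J E h -> h != 0 ->
  exists x, [/\ J x \/ E x, x != 0 & (lm x <= lm h)%MM].
Proof.
move=> IJ IE GB SN h [j [e [Jj [Ee ->]]]] nz.
have [mu [b1 b2]] := bnd_both j e.
exact: key_desc IJ IE GB SN mu j e Jj Ee b1 b2 nz.
Qed.

Lemma initL (J F : S -> Prop) (GJ : seq S) :
  is_ideal J -> is_ideal F -> groebner_basis le GJ J -> S_nice le GJ F ->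
  set_eq (init_ideal le (ideal_sum J F)) (ideal_sum (init_ideal le J) (init_ideal le F)).
Proof.
move=> IJ IF GB SN p; split.
  apply: gen_sub; first by apply: sum_ideal; apply: gen_ideal.
  move=> q [h [Hh [hnz ->]]].
  have [x [[Jx|Fx] xnz dv]] := key IJ IF GB SN Hh hnz.
  - rewrite -(submK dv) mpolyXD; exists ('X_[lm h - lm x] * 'X_[lm x]), 0.
    split; last split; last by rewrite addr0.
      by case: (gen_ideal (fun q : S => exists f, J f /\ f != 0 /\ q = 'X_[lm f])) => _ _ IM;
       apply: IM; apply: gen1; exists x.
    by case: (gen_ideal (fun q : S => exists f, F f /\ f != 0 /\ q = 'X_[lm f])).
  - rewrite -(submK dv) mpolyXD; exists 0, ('X_[lm h - lm x] * 'X_[lm x]).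
    split; last split; last by rewrite add0r.
      by case: (gen_ideal (fun q : S => exists f, J f /\ f != 0 /\ q = 'X_[lm f])).
    by case: (gen_ideal (fun q : S => exists f, F f /\ f != 0 /\ q = 'X_[lm f])) => _ _ IM;
       apply: IM; apply: gen1; exists x.
move=> [a [b [ha [hb ->]]]].
case: (gen_ideal (fun q : S => exists f, ideal_sum J F f /\ f != 0 /\ q = 'X_[lm f])) => _ ID _.
apply: ID.
  move: ha; apply: gen_mono => q [f [Jf [fnz ->]]]; exists f; split; last by split.
  by exists f, 0; split => //; split; [case: IF | rewrite addr0].
move: hb; apply: gen_mono => q [f [Ff [fnz ->]]]; exists f; split; last by split.
by exists 0, f; split; [case: IJ | split; [ | rewrite add0r]].
Qed.

Lemma main_sec (J E E' : S -> Prop) (GJ : seq S) :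
  is_ideal J -> is_ideal E -> is_ideal E' ->
  groebner_basis le GJ J ->
  S_nice le GJ E -> S_nice le GJ E' ->
  (set_eq (ideal_cap (ideal_sum J E) (ideal_sum J E'))
          (ideal_sum J (ideal_cap E E'))
   <->
   set_eq (init_ideal le (ideal_cap (ideal_sum J E) (ideal_sum J E')))
          (ideal_sum (init_ideal le J) (init_ideal le (ideal_cap E E')))).
Proof.
move=> IJ IE IE' GB SN SN'.
set A := ideal_cap (ideal_sum J E) (ideal_sum J E').
set B := ideal_sum J (ideal_cap E E').
have IA : is_ideal A by apply: cap_ideal; apply: sum_ideal.
have IB : is_ideal B by apply: sum_ideal => //; apply: cap_ideal.
have SNc : S_nice le GJ (ideal_cap E E').
  by move=> f g fG [gE gE'] gnz; split; [exact: SN | exact: SN'].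
have BA : forall p, B p -> A p.
  by move=> p [a [b [ha [[hb hb'] ->]]]]; split; [exists a, b | exists a, b].
have IL := initL IJ (cap_ideal IE IE') GB SNc.
split.
  move=> HAB p; split => h.
    apply/IL; move: h; apply: gen_mono => q [f [Af [fnz ->]]]; exists f; split; last by split.
    exact/HAB.
  move/IL: h; apply: gen_mono => q [f [Bf [fnz ->]]]; exists f; split; last by split.
  exact: BA.
move=> HI p; split; last exact: BA.
move=> Ap; have [mu bp] : exists mu, bnd p mu by exists (lm p); exact: bnd_lm.
elim/(well_founded_ind (mlt_wf Hle)): mu p Ap bp => mu IH f Af bf.
have [f0|fnz] := eqVneq f 0; first by rewrite f0; case: IB.
have : init_ideal le B 'X_[lm f].
  apply/IL; apply/HI; apply: gen1; exists f; done.
move/init_div => [b [Bb bnz dv]].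
have [tc tb] := cancel_lem (lc f) bnz dv.
set t := (lc f / lc b) *: 'X_[(lm f - lm b)] in tc tb.
have Bt : B (t * b) by case: IB => _ _ IM; apply: IM.
pose f' := f - t * b.
have Af' : A f' by apply: idealB => //; apply: BA.
have bf' : bnd f' (lm f) by apply: bndD; [exact: bnd_lm | exact: bndN].
have z : f'@_(lm f) = 0 by rewrite mcoeffB tc subrr.
have Ef : f = f' + t * b by rewrite /f' subrK.
have [f'0|f'nz] := eqVneq f' 0; first by rewrite Ef f'0 add0r.
have lt := mlt_strict_bnd bf' z (lm_supp f'nz).
have lemu : le (lm f) mu := bf _ (lm_supp fnz).
have Bf' := IH _ (mlt_le_trans Hle lt lemu) f' Af' (@bnd_lm f').
by rewrite Ef; case: IB => _ ID _; apply: ID.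
Qed.

End Poly.

Unset Implicit Arguments.
Set Strict Implicit.

Theorem mainTheorem17 (n : nat) (K : fieldType) (le : rel 'X_{1..n})
  (J E E' : {mpoly K[n]} -> Prop) (GJ : seq {mpoly K[n]}) :
  monomial_order le ->
  is_ideal J -> is_ideal E -> is_ideal E' ->
  groebner_basis le GJ J ->
  S_nice le GJ E -> S_nice le GJ E' ->
  (set_eq (ideal_cap (ideal_sum J E) (ideal_sum J E'))
          (ideal_sum J (ideal_cap E E'))
   <->
   set_eq (init_ideal le (ideal_cap (ideal_sum J E) (ideal_sum J E')))
          (ideal_sum (init_ideal le J) (init_ideal le (ideal_cap E E')))).
Proof. move=> Hle; exact: main_sec. Qed.
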